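(* For every $M>0$ there is a min-CICS instance $\mathbbm{I}=(\mathcal{F},\mathbb{M})$ with two MDPs $\mathbb{M}=(\mathcal{M}_1,\mathcal{M}_2)$ and the constraint $\mathcal{F}=\{\{1\},\{2\},\{1,2\}\}$ such that $\mathrm{ComGap}(\mathbbm{I})\ge M$; that is, the commitment gap of min-CICS is unbounded even for this single-selection constraint.
   Context: min-CICS: an instance $\mathbbm{I}=(\mathcal{F},\mathbb{M})$ consists of an upwards-closed family $\mathcal{F}\subseteq 2^{[n]}$ and $n$ acyclic Markov decision processes $\mathcal{M}_i$, each with a finite state set, root $\sigma_i$, actions $A_i(s)$ with nonnegative costs $c_i(a)$ and transition distributions $\Pi_i(s,a)$, and sink (terminal) states with nonnegative (possibly $+\infty$) values $v_i(t)$. A policy starts with all MDPs at their roots and repeatedly (adaptively) either advances some MDP in a non-terminal state by an action (paying its cost, random transition), or halts by selecting $S\in\mathcal{F}$ among MDPs currently in terminal states, paying $\sum_{i\in S}v_i(s_i)$. Its disutility is the expected total of action costs plus paid values; $\mathrm{OPT}(\mathbbm{I})$ is the minimum disutility over policies. A commitment $(\pi_1,\dots,\pi_n)$ assigns each state $s$ of $\mathcal{M}_i$ a distribution $\pi_i(s)$ over $A_i(s)$; a committing policy draws its action from $\pi_i(s)$ whenever it advances $\mathcal{M}_i$ at state $s$ (other choices may be adaptive). For min-CICS, $\mathrm{ComGap}(\mathbbm{I})=\inf\{\text{disutility of }\mathcal{T}:\mathcal{T}\text{ committing}\}/\mathrm{OPT}(\mathbbm{I})$. *)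

(* Defs.v *)
From HB Require Import structures.
From mathcomp Require Import all_boot all_order all_algebra.
From mathcomp Require Import boolp classical_sets reals constructive_ereal ereal.
Set Implicit Arguments. Unset Strict Implicit. Unset Printing Implicit Defensive.
Import Order.TTheory GRing.Theory Num.Theory.
Local Open Scope ring_scope.
Local Open Scope classical_set_scope.

(*   m_act    : finite pool of action names; A(s) = [pred a | m_avail s a]   *)
Record MDP (R : realType) := {
  m_st : finType;
  m_act : finType;
  m_root : m_st;
  m_term : pred m_st;
  m_avail : m_st -> pred m_act;
  m_cost : m_st -> m_act -> R;
  m_trans : m_st -> m_act -> {ffun m_st -> R};
  m_val : m_st -> \bar R
}.

Definition isdist (R : realType) (T : finType) (p : {ffun T -> R}) : bool :=
  [forall x, 0 <= p x] && (\sum_(x : T) p x == 1).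

(* well-formedness of an MDP: sinks have no actions, non-sinks have some,
   nonnegative costs, genuine transition distributions, nonnegative
   (possibly infinite) terminal values, and acyclicity (the transition graph
   admits a strictly decreasing rank, i.e. has no directed cycle). *)
Definition wf_MDP (R : realType) (M : MDP R) : Prop :=
  (forall (s : m_st M) a, m_avail s a -> ~~ m_term s) /\
  (forall s : m_st M, ~~ m_term s -> exists a, m_avail s a) /\
  (forall (s : m_st M) a, m_avail s a -> 0 <= m_cost s a) /\
  (forall (s : m_st M) a, m_avail s a -> isdist (m_trans s a)) /\
  (forall s : m_st M, m_term s -> (0 <= m_val s)%E) /\
  (exists rk : m_st M -> nat, forall (s : m_st M) a t,
          m_avail s a -> 0 < m_trans s a t -> (rk t < rk s)%N).

(* moves of a policy with two MDPs (indices ord0 = MDP 1, ord_max = MDP 2) *)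
Inductive move := Adv1 | Adv2 | Halt of {set 'I_2}.

Section Eval.
Variables (R : realType) (M1 M2 : MDP R) (F : {set {set 'I_2}}).

(* a history: for each past advance, the joint state and the action taken *)
Definition hist := seq (m_st M1 * m_st M2 * (m_act M1 + m_act M2)).

(* An adaptive policy: [mv] chooses, from the history and the current joint
   state, whether to advance MDP 1, advance MDP 2, or halt selecting a set;
   [d1]/[d2] give the distribution from which the action is drawn when the
   corresponding MDP is advanced.  Invalid moves (advancing a sink, using an
   unavailable action, halting with an infeasible set) cost +oo.  *)
Variables (mv : hist -> m_st M1 -> m_st M2 -> move)
          (d1 : hist -> m_st M1 -> m_st M2 -> {ffun m_act M1 -> R})
          (d2 : hist -> m_st M1 -> m_st M2 -> {ffun m_act M2 -> R}).

Definition term2 (s1 : m_st M1) (s2 : m_st M2) (i : 'I_2) : bool :=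
  if i == ord0 then m_term s1 else m_term s2.
Definition val2 (s1 : m_st M1) (s2 : m_st M2) (i : 'I_2) : \bar R :=
  if i == ord0 then m_val s1 else m_val s2.

Fixpoint eval (k : nat) (h : hist) (s1 : m_st M1) (s2 : m_st M2) : \bar R :=
  if k is k'.+1 then
    match mv h s1 s2 with
    | Halt X =>
        if (X \in F) && [forall i in X, term2 s1 s2 i]
        then (\sum_(i in X) val2 s1 s2 i)%E else +oo%E
    | Adv1 =>
        let p := d1 h s1 s2 in
        if ~~ m_term s1 && isdist p && [forall a, (0 < p a) ==> m_avail s1 a]
        then (\sum_(a : m_act M1) (p a)%:E *
               ((m_cost s1 a)%:E +
                \sum_(t : m_st M1) (m_trans s1 a t)%:E *
                   eval k' (rcons h (s1, s2, inl a)) t s2))%E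
        else +oo%E
    | Adv2 =>
        let p := d2 h s1 s2 in
        if ~~ m_term s2 && isdist p && [forall a, (0 < p a) ==> m_avail s2 a]
        then (\sum_(a : m_act M2) (p a)%:E *
               ((m_cost s2 a)%:E +
                \sum_(t : m_st M2) (m_trans s2 a t)%:E *
                   eval k' (rcons h (s1, s2, inr a)) s1 t))%E
        else +oo%E
    end
  else +oo%E.

(* disutility from the roots; the fuel suffices since along any run each
   MDP visits each of its states at most once (acyclicity). *)
Definition disutility : \bar R :=
  eval (#|m_st M1| + #|m_st M2| + 1) [::] (m_root M1) (m_root M2).

End Eval.

Definition dirac (T : finType) (R : realType) (a : T) : {ffun T -> R} :=
  [ffun b => if b == a then 1 else 0].

Record policy (R : realType) (M1 M2 : MDP R) := {
  p_move : hist M1 M2 -> m_st M1 -> m_st M2 -> move;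
  p_act1 : hist M1 M2 -> m_st M1 -> m_st M2 -> m_act M1;
  p_act2 : hist M1 M2 -> m_st M1 -> m_st M2 -> m_act M2
}.

Definition policy_disutility (R : realType) (M1 M2 : MDP R)
    (F : {set {set 'I_2}}) (P : policy M1 M2) : \bar R :=
  disutility F (p_move P)
    (fun h s1 s2 => dirac R (p_act1 P h s1 s2))
    (fun h s1 s2 => dirac R (p_act2 P h s1 s2)).

Definition OPT (R : realType) (F : {set {set 'I_2}}) (M1 M2 : MDP R) : \bar R :=
  ereal_inf (range (@policy_disutility R M1 M2 F)).

Definition commitment_ok (R : realType) (M : MDP R)
    (pi : m_st M -> {ffun m_act M -> R}) : Prop :=
  forall s : m_st M, ~~ m_term s ->
    isdist (pi s) /\ (forall a, 0 < pi s a -> m_avail s a).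

Definition ComInf (R : realType) (F : {set {set 'I_2}}) (M1 M2 : MDP R) : \bar R :=
  ereal_inf [set x | exists (mv : hist M1 M2 -> m_st M1 -> m_st M2 -> move)
                       (pi1 : m_st M1 -> {ffun m_act M1 -> R})
                       (pi2 : m_st M2 -> {ffun m_act M2 -> R}),
      [/\ commitment_ok pi1, commitment_ok pi2 &
          x = disutility F mv (fun _ s1 _ => pi1 s1) (fun _ _ s2 => pi2 s2)]].

Definition F_single : {set {set 'I_2}} :=
  ([set [set ord0]; [set ord_max]; [set: 'I_2]])%SET.

(* Main.v *)
Require Import Defs.
From HB Require Import structures.
From mathcomp Require Import all_boot all_order all_algebra.
From mathcomp Require Import boolp classical_sets reals constructive_ereal ereal.
From mathcomp Require Import ring lra.
Import Order.TTheory GRing.Theory Num.Theory.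
Local Open Scope ring_scope.

Section Gen.
Variables (R : realType) (M1 M2 : MDP R).
Variables (mv : hist M1 M2 -> m_st M1 -> m_st M2 -> move)
          (d1 : hist M1 M2 -> m_st M1 -> m_st M2 -> {ffun m_act M1 -> R})
          (d2 : hist M1 M2 -> m_st M1 -> m_st M2 -> {ffun m_act M2 -> R}).
Variable V : m_st M1 -> m_st M2 -> \bar R.
Hypothesis Htr1 : forall s a t, 0 <= m_trans (m:=M1) s a t.
Hypothesis Htr2 : forall s a t, 0 <= m_trans (m:=M2) s a t.
Hypothesis Hval1 : forall s, (0 <= m_val (m:=M1) s)%E.
Hypothesis Hval2 : forall s, (0 <= m_val (m:=M2) s)%E.
Hypothesis HV1 : forall s1 s2, m_term s1 -> (V s1 s2 <= m_val s1)%E.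
Hypothesis HV2 : forall s1 s2, m_term s2 -> (V s1 s2 <= m_val s2)%E.
Hypothesis Hadv1 : forall h s1 s2, ~~ m_term s1 -> isdist (d1 h s1 s2) ->
  [forall a, (0 < d1 h s1 s2 a) ==> m_avail s1 a] ->
  (V s1 s2 <= \sum_(a : m_act M1) (d1 h s1 s2 a)%:E *
     ((m_cost s1 a)%:E + \sum_(t : m_st M1) (m_trans s1 a t)%:E * V t s2))%E.
Hypothesis Hadv2 : forall h s1 s2, ~~ m_term s2 -> isdist (d2 h s1 s2) ->
  [forall a, (0 < d2 h s1 s2 a) ==> m_avail s2 a] ->
  (V s1 s2 <= \sum_(a : m_act M2) (d2 h s1 s2 a)%:E *
     ((m_cost s2 a)%:E + \sum_(t : m_st M2) (m_trans s2 a t)%:E * V s1 t))%E.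

Lemma bellman k h s1 s2 : (V s1 s2 <= Defs.eval F_single mv d1 d2 k h s1 s2)%E.
Proof.
elim: k h s1 s2 => [|k IH] h s1 s2 /=; first exact: leey.
case: (mv h s1 s2) => [||X].
- case: ifP => [/andP[/andP[nt dp] sp]|_]; last exact: leey.
  apply: le_trans; first exact: (Hadv1 _ _ _ nt dp sp).
  apply: lee_sum => a _.
  have p0 : 0 <= d1 h s1 s2 a by move: dp => /andP[/forallP + _]; apply.
  apply: lee_wpmul2l; first by rewrite lee_fin.
  apply: leeD2l; apply: lee_sum => t _.
  by apply: lee_wpmul2l; [rewrite lee_fin | apply: IH].
- case: ifP => [/andP[/andP[nt dp] sp]|_]; last exact: leey.
  apply: le_trans; first exact: (Hadv2 _ _ _ nt dp sp).
  apply: lee_sum => a _.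
  have p0 : 0 <= d2 h s1 s2 a by move: dp => /andP[/forallP + _]; apply.
  apply: lee_wpmul2l; first by rewrite lee_fin.
  apply: leeD2l; apply: lee_sum => t _.
  by apply: lee_wpmul2l; [rewrite lee_fin | apply: IH].
- case: ifP => [/andP[XF /forall_inP tX]|_]; last exact: leey.
  move: XF tX; rewrite /F_single !finset.in_setU !finset.in_set1 => /orP[/orP[]|] /eqP -> tX.
  + rewrite big_set1; have := tX ord0; rewrite /term2 /val2 /= finset.in_set1 eqxx => /(_ isT).
    exact: HV1.
  + rewrite big_set1; have := tX ord_max; rewrite /term2 /val2 /= finset.in_set1 eqxx => /(_ isT).
    exact: HV2.
  + have := tX ord0; rewrite /term2 /val2 /= finset.in_setT => /(_ isT) t1.
    rewrite (eq_bigl (fun _ => true)); last by move=> i; rewrite finset.in_setT.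
    rewrite big_ord_recl big_ord1 /=.
    by apply: lee_paddr; [exact: Hval2 | exact: HV1].
Qed.
End Gen.

Section Up.
Variables (R : realType) (M1 M2 : MDP R).
Variables (mv : hist M1 M2 -> m_st M1 -> m_st M2 -> move)
          (d1 : hist M1 M2 -> m_st M1 -> m_st M2 -> {ffun m_act M1 -> R})
          (d2 : hist M1 M2 -> m_st M1 -> m_st M2 -> {ffun m_act M2 -> R}).
Variable W : m_st M1 -> m_st M2 -> \bar R.
Variable rk : m_st M1 -> m_st M2 -> nat.
Hypothesis Htr1 : forall s a t, 0 <= m_trans (m:=M1) s a t.
Hypothesis Htr2 : forall s a t, 0 <= m_trans (m:=M2) s a t.
Hypothesis Hup : forall h s1 s2, W s1 s2 = +oo%E \/
  match mv h s1 s2 with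
  | Halt X => ((X \in F_single) && [forall i in X, term2 s1 s2 i]) /\
              (\sum_(i in X) val2 s1 s2 i <= W s1 s2)%E
  | Adv1 => let p := d1 h s1 s2 in
      [/\ ~~ m_term s1 && isdist p && [forall a, (0 < p a) ==> m_avail s1 a],
          (forall a t, 0 < m_trans s1 a t -> (rk t s2 < rk s1 s2)%N) &
          (\sum_(a : m_act M1) (p a)%:E *
             ((m_cost s1 a)%:E + \sum_(t : m_st M1) (m_trans s1 a t)%:E * W t s2)
            <= W s1 s2)%E]
  | Adv2 => let p := d2 h s1 s2 in
      [/\ ~~ m_term s2 && isdist p && [forall a, (0 < p a) ==> m_avail s2 a],
          (forall a t, 0 < m_trans s2 a t -> (rk s1 t < rk s1 s2)%N) &
          (\sum_(a : m_act M2) (p a)%:E *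
             ((m_cost s2 a)%:E + \sum_(t : m_st M2) (m_trans s2 a t)%:E * W s1 t)
            <= W s1 s2)%E]
  end.

Lemma bellman_up k h s1 s2 : (rk s1 s2 < k)%N ->
  (Defs.eval F_single mv d1 d2 k h s1 s2 <= W s1 s2)%E.
Proof.
elim: k h s1 s2 => [//|k IH] h s1 s2 rkk.
case: (Hup h s1 s2) => [->|]; first exact: leey.
rewrite /=; case: (mv h s1 s2) => [||X].
- move=> [c hr hs]; rewrite c; apply: le_trans hs.
  apply: lee_sum => a _.
  move: c => /andP[/andP[_ /andP[/forallP p0 _]] _].
  have [pa|pa] := boolP (0 < d1 h s1 s2 a); last first.
    have -> : d1 h s1 s2 a = 0 by apply/eqP; rewrite eq_le p0 andbT leNgt.
    by rewrite !mul0e.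
  apply: lee_wpmul2l; first by rewrite lee_fin p0.
  apply: leeD2l; apply: lee_sum => t _.
  have [tp|tp] := boolP (0 < m_trans s1 a t); last first.
    have -> : m_trans s1 a t = 0 by apply/eqP; rewrite eq_le Htr1 andbT leNgt.
    by rewrite !mul0e.
  apply: lee_wpmul2l; first by rewrite lee_fin Htr1.
  apply: IH; exact: leq_trans (hr _ _ tp) rkk.
- move=> [c hr hs]; rewrite c; apply: le_trans hs.
  apply: lee_sum => a _.
  move: c => /andP[/andP[_ /andP[/forallP p0 _]] _].
  have [pa|pa] := boolP (0 < d2 h s1 s2 a); last first.
    have -> : d2 h s1 s2 a = 0 by apply/eqP; rewrite eq_le p0 andbT leNgt.
    by rewrite !mul0e.
  apply: lee_wpmul2l; first by rewrite lee_fin p0.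
  apply: leeD2l; apply: lee_sum => t _.
  have [tp|tp] := boolP (0 < m_trans s2 a t); last first.
    have -> : m_trans s2 a t = 0 by apply/eqP; rewrite eq_le Htr2 andbT leNgt.
    by rewrite !mul0e.
  apply: lee_wpmul2l; first by rewrite lee_fin Htr2.
  apply: IH; exact: leq_trans (hr _ _ tp) rkk.
- by move=> [-> hs].
Qed.
End Up.

Section Inst.
Variables (R : realType) (e : R).
Hypothesis e0 : 0 < e.
Hypothesis e1 : e <= 1.

Definition trR : {ffun 'I_3 -> R} :=
  [ffun t : 'I_3 => if nat_of_ord t == 1%N then 1 - e else if nat_of_ord t == 2%N then e else 0].
Definition trS : {ffun 'I_3 -> R} :=
  [ffun t : 'I_3 => if nat_of_ord t == 1%N then 1 else 0].

Definition MA : MDP R := {|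
  m_st := 'I_3; m_act := 'I_2; m_root := ord0;
  m_term := fun s : 'I_3 => nat_of_ord s != 0%N;
  m_avail := fun (s : 'I_3) (_ : 'I_2) => nat_of_ord s == 0%N;
  m_cost := fun (_ : 'I_3) (a : 'I_2) => if nat_of_ord a == 0%N then 1 else e;
  m_trans := fun (_ : 'I_3) (a : 'I_2) => if nat_of_ord a == 0%N then trS else trR;
  m_val := fun s : 'I_3 => if nat_of_ord s == 2%N then +oo%E else 0%E |}.

Definition MB : MDP R := {|
  m_st := 'I_3; m_act := 'I_1; m_root := ord0;
  m_term := fun s : 'I_3 => nat_of_ord s != 0%N;
  m_avail := fun (s : 'I_3) (_ : 'I_1) => nat_of_ord s == 0%N;
  m_cost := fun (_ : 'I_3) (a : 'I_1) => e;
  m_trans := fun (_ : 'I_3) (a : 'I_1) => trR;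
  m_val := fun s : 'I_3 => if nat_of_ord s == 2%N then +oo%E else
                           if nat_of_ord s == 1%N then 1%E else 0%E |}.

Lemma trR_ge0 t : 0 <= trR t.
Proof. rewrite ffunE; case: ifP => _; first by rewrite subr_ge0.
by case: ifP => _; [exact: ltW|]. Qed.
Lemma trS_ge0 t : 0 <= trS t.
Proof. by rewrite ffunE; case: ifP. Qed.

Lemma trR_dist : isdist trR.
Proof.
apply/andP; split; first by apply/forallP => t; exact: trR_ge0.
by rewrite !big_ord_recl big_ord0 !ffunE /=; apply/eqP; ring.
Qed.
Lemma trS_dist : isdist trS.
Proof.
apply/andP; split; first by apply/forallP => t; exact: trS_ge0.
by rewrite !big_ord_recl big_ord0 !ffunE /=; apply/eqP; ring.
Qed.

Lemma wfA : wf_MDP MA.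
Proof.
rewrite /wf_MDP /=; split; [|split; [|split; [|split; [|split]]]].
- by move=> s a /eqP ->.
- by move=> s; rewrite negbK => H; exists ord0.
- by move=> s a _; case: ifP => _; [exact: ler01 | exact: ltW].
- by move=> s a _; case: ifP => _; [exact: trS_dist | exact: trR_dist].
- by move=> s _; case: ifP.
- exists (fun s : 'I_3 => if nat_of_ord s == 0%N then 1%N else 0%N).
  move=> s a t /eqP -> /=; case: ifP => _; rewrite ffunE;
  case: (nat_of_ord t) => [|n] //=; rewrite ?ltxx //.
Qed.
Lemma wfB : wf_MDP MB.
Proof.
rewrite /wf_MDP /=; split; [|split; [|split; [|split; [|split]]]].
- by move=> s a /eqP ->.
- by move=> s; rewrite negbK => H; exists ord0.
- by move=> s a _; exact: ltW.
- by move=> s a _; exact: trR_dist.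
- by move=> s _; case: ifP => // _; case: ifP.
- exists (fun s : 'I_3 => if nat_of_ord s == 0%N then 1%N else 0%N).
  move=> s a t /eqP -> /=; rewrite ffunE;
  case: (nat_of_ord t) => [|n] //=; rewrite ?ltxx //.
Qed.
End Inst.
Arguments MA {R} e. Arguments MB {R} e. Arguments trR {R} e. Arguments trS {R}.

Lemma adv_lb (R : realType) (T A : finType) (p : {ffun A -> R}) (c : R)
  (cost : A -> R) (tr : A -> T -> R) (W : T -> \bar R) :
  isdist p -> (forall a, c <= cost a) -> (forall a t, 0 <= tr a t) ->
  (forall t, (0 <= W t)%E) ->
  (c%:E <= \sum_a (p a)%:E * ((cost a)%:E + \sum_t (tr a t)%:E * W t))%E.
Proof.
move=> /andP[/forallP p0 /eqP p1] hc htr hW.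
apply: (@le_trans _ _ (\sum_a (p a)%:E * c%:E)%E).
  rewrite (eq_bigr (fun a => (p a * c)%:E)); last by move=> a _.
  by rewrite sumEFin -mulr_suml p1 mul1r.
apply: lee_sum => a _; apply: lee_wpmul2l; first by rewrite lee_fin.
apply: lee_paddr; last by rewrite lee_fin.
by apply: sume_ge0 => t _; apply: mule_ge0; [rewrite lee_fin|].
Qed.

Section Bounds.
Variables (R : realType) (e : R).
Hypothesis e0 : 0 < e.
Hypothesis e1 : e <= 1.

Definition V0 (s1 s2 : 'I_3) : \bar R :=
  if (nat_of_ord s1 == 0%N) && (nat_of_ord s2 == 0%N) then e%:E else 0%E.

Lemma V0_ge0 s1 s2 : (0 <= V0 s1 s2)%E.
Proof. by rewrite /V0; case: ifP => _ //; rewrite lee_fin ltW. Qed.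
Lemma V0_le s1 s2 : (V0 s1 s2 <= e%:E)%E.
Proof. by rewrite /V0; case: ifP => _ //; rewrite lee_fin ltW. Qed.

Lemma opt_lb : (e%:E <= OPT F_single (MA e) (MB e))%E.
Proof.
apply/ereal_infP => _ [P _ <-].
rewrite /policy_disutility /disutility.
apply: (@le_trans _ _ (V0 ord0 ord0)); first by rewrite /V0 /=.
apply: (@bellman R (MA e) (MB e) _ _ _ V0).
- by move=> s a t /=; case: ifP => _; [exact: trS_ge0 | exact: trR_ge0].
- by move=> s a t /=; exact: trR_ge0.
- by move=> s /=; case: ifP => // _; case: ifP.
- by move=> s1 s2 /= nt; rewrite /V0 (negbTE nt) /=; case: ifP.
- by move=> s1 s2 /= nt; rewrite /V0 (negbTE nt) andbF /=; case: ifP => // _; case: ifP.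
- move=> h s1 s2 _ dp _; apply: le_trans (V0_le _ _) _.
  apply: (@adv_lb R 'I_3 'I_2 _ e (fun a => m_cost (m:=MA e) s1 a)
            (fun a t => m_trans (m:=MA e) s1 a t) (fun t => V0 t s2)) => //.
  + by move=> a /=; case: ifP.
  + by move=> a t /=; case: ifP => _; [exact: trS_ge0 | exact: trR_ge0].
  + by move=> t; exact: V0_ge0.
- move=> h s1 s2 _ dp _; apply: le_trans (V0_le _ _) _.
  apply: (@adv_lb R 'I_3 'I_1 _ e (fun a => m_cost (m:=MB e) s2 a)
            (fun a t => m_trans (m:=MB e) s2 a t) (fun t => V0 s1 t)) => //.
  + by move=> a t /=; exact: trR_ge0.
  + by move=> t; exact: V0_ge0.
Qed.
End Bounds.

Section Com.
Variables (R : realType) (e : R).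
Hypothesis e0 : 0 < e.
Hypothesis e1 : e <= 1.

Lemma dist2 (p : {ffun 'I_2 -> R}) : isdist p ->
  [/\ 0 <= p ord0, 0 <= p (lift ord0 ord0) & p ord0 + p (lift ord0 ord0) = 1].
Proof.
move=> /andP[/forallP p0 /eqP p1]; split => //.
by move: p1; rewrite !big_ord_recl big_ord0 addr0.
Qed.
Lemma dist1 (p : {ffun 'I_1 -> R}) : isdist p -> p ord0 = 1.
Proof.
by move=> /andP[_ /eqP]; rewrite big_ord_recl big_ord0 addr0.
Qed.
Lemma EY (c : R) : 0 < c -> (c%:E * +oo)%E = +oo%E.
Proof. by move=> c0; rewrite mulry gtr0_sg // mul1e. Qed.

Definition V1 (b : bool) (s1 s2 : 'I_3) : \bar R :=
  match nat_of_ord s1, nat_of_ord s2 with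
  | 0, 0 => 1%E
  | 0, 1 => if b then 0%E else 1%E
  | 0, _ => if b then +oo%E else 1%E
  | 1, _ => 0%E
  | _, 0 => +oo%E
  | _, 1 => 1%E
  | _, _ => +oo%E
  end%N.

Lemma com_lb : (1%:E <= ComInf F_single (MA e) (MB e))%E.
Proof.
apply/ereal_infP => _ [mv [pi1 [pi2 [_ _ ->]]]].
rewrite /disutility.
set b := (0 < pi1 ord0 (lift ord0 ord0)).
apply: (@le_trans _ _ (V1 b ord0 ord0)); first by [].
apply: (@bellman R (MA e) (MB e) _ _ _ (V1 b)).
- by move=> s a t /=; case: ifP => _; [exact: trS_ge0 | exact: trR_ge0].
- by move=> s a t /=; exact: trR_ge0.
- by move=> s /=; case: ifP => // _; case: ifP.
- move=> [[|[|[|?]]] H1] [[|[|[|?]]] H2] //= _; rewrite /V1 /=; try exact: leey.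
- move=> [[|[|[|?]]] H1] [[|[|[|?]]] H2] //= _; rewrite /V1 /=; try exact: leey; by case: b.
{ move=> h s1 s2 nt dp _.
  have E : s1 = ord0 by apply/val_inj/eqP; move: nt; rewrite /= negbK.
  subst s1.
  have [q0 q1 q01] := dist2 _ dp.
  have [bt|bf] := boolP b.
  { have bt' : 0 < pi1 ord0 (lift ord0 ord0) := bt.
    case: s2 => [[|[|[|?]]] H2] //.
    all: rewrite /MA /= !big_ord_recl !big_ord0 /= !ffunE /=.
    all: rewrite /V1 /= ?mul0e ?add0e ?adde0 ?mul1e ?mule0 ?adde0 ?add0e ?mule1.
    all: rewrite ?(EY _ e0) ?addey // ?(EY _ bt') ?addey ?leey //.
    apply: adde_ge0; first by rewrite lee_fin.
    apply: mule_ge0; first by rewrite lee_fin.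
    by apply: adde_ge0; rewrite lee_fin ltW. }
  { have p10 : pi1 ord0 (lift ord0 ord0) = 0.
      by apply/eqP; rewrite eq_le q1 andbT leNgt.
    case: s2 => [[|[|[|?]]] H2] //.
    all: rewrite /MA /= !big_ord_recl !big_ord0 /= !ffunE /=.
    all: rewrite /V1 /= ?mul0e ?add0e ?adde0 ?mul1e ?mule0 ?adde0 ?add0e ?mule1.
    all: by rewrite p10 mul0e adde0 lee_fin; move: q01; rewrite p10 addr0 => ->. } }
{ move=> h s1 s2 nt dp _.
  have E : s2 = ord0 by apply/val_inj/eqP; move: nt; rewrite /= negbK.
  subst s2. case: s1 => [[|[|[|?]]] H1] //.
  all: rewrite /MB /= !big_ord_recl !big_ord0 /= !ffunE /=.
  all: rewrite /V1 /= ?mul0e ?add0e ?adde0 ?mul1e ?mule0 ?adde0 ?add0e ?mule1.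
  all: rewrite (dist1 _ dp) mul1e.
  - have [bt|bf] := boolP b.
    + by rewrite /= mule0 add0e (EY _ e0) addey // leey.
    + rewrite /= !mule1 -!EFinD -[1%E]/(1%:E). rewrite lee_fin. rewrite subrK. rewrite lerDr. exact: ltW.
  - by rewrite lee_fin ltW.
  - by rewrite (EY _ e0) addey // addey. }
Qed.
End Com.

Section Upper.
Variables (R : realType) (e : R).
Hypothesis e0 : 0 < e.
Hypothesis e1 : e <= 1.

Definition Pol : policy (MA e) (MB e) :=
  @Build_policy R (MA e) (MB e)
  (fun _ (s1 : 'I_3) (s2 : 'I_3) =>
    if nat_of_ord s2 == 0%N then Adv2 else if nat_of_ord s1 == 0%N then Adv1
    else if nat_of_ord s1 == 1%N then Halt [set ord0]%SET else Halt [set ord_max]%SET)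
  (fun _ (s1 : 'I_3) (s2 : 'I_3) =>
    if nat_of_ord s2 == 2%N then (ord0 : 'I_2) else lift ord0 ord0)
  (fun _ _ _ => (ord0 : 'I_1)).

Definition ev := @Defs.eval R (MA e) (MB e) F_single (p_move Pol)
    (fun h s1 s2 => dirac R (p_act1 Pol h s1 s2))
    (fun h s1 s2 => dirac R (p_act2 Pol h s1 s2)).

Lemma dirac_dist (T : finType) (a : T) : isdist (dirac R a).
Proof.
apply/andP; split; first by apply/forallP => x; rewrite ffunE; case: ifP.
rewrite (bigD1 a) //= big1 ?ffunE ?eqxx ?addr0 // => x /negbTE xa.
by rewrite ffunE xa.
Qed.

Lemma inF1 : ([set ord0] : {set 'I_2}) \in F_single.
Proof. by rewrite /F_single !finset.in_setU !finset.in_set1 eqxx. Qed.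
Lemma inF2 : ([set ord_max] : {set 'I_2}) \in F_single.
Proof. by rewrite /F_single !finset.in_setU !finset.in_set1 eqxx /= orbT. Qed.
Lemma forall1 (P : pred 'I_2) (a : 'I_2) : [forall i in [set a], P i] = P a.
Proof.
apply/forall_inP/idP => [H|H i]; first by apply: H; rewrite finset.in_set1.
by rewrite finset.in_set1 => /eqP ->.
Qed.

Definition W (s1 s2 : 'I_3) : \bar R :=
  match nat_of_ord s1, nat_of_ord s2 with
  | 0, 0 => (4 * e)%:E
  | 0, 1 => (e + e)%:E
  | 0, 2 => 1%E
  | 1, 1 => 0%E
  | 1, 2 => 0%E
  | 2, 1 => 1%E
  | _, _ => +oo%E
  end%N.
Definition rkW (s1 s2 : 'I_3) : nat :=
  ((nat_of_ord s1 == 0%N) + (nat_of_ord s2 == 0%N))%N.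

Lemma FT (T : finType) (P : pred T) : [forall a, P a ==> true] = true.
Proof. by apply/forallP => a; rewrite implybT. Qed.

Lemma pol_up : (policy_disutility F_single Pol <= (4 * e)%:E)%E.
Proof.
rewrite /policy_disutility /disutility.
apply: (@le_trans _ _ (W ord0 ord0)); last by [].
apply: (@bellman_up R (MA e) (MB e) _ _ _ W rkW); last by rewrite !card_ord.
- by move=> s a t /=; case: ifP => _; [exact: trS_ge0 | exact: trR_ge0].
- by move=> s a t /=; exact: trR_ge0.
move=> h [[|[|[|?]]] H1] [[|[|[|?]]] H2] //.
all: try by left.
all: right; rewrite /=.
all: try (split; first by (apply/andP; split; [exact: dirac_dist | apply/forallP => a; rewrite eqxx implybT])).
all: try (split; first by rewrite inF1 forall1 /term2 /=).
all: try (split; first by rewrite inF2 forall1 /term2 /=).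
all: try by rewrite big_set1 /val2 /=.
all: try (by move=> a [[|[|[|?]]] Ht]; rewrite /rkW /= //; rewrite ?ffunE /= ?ltxx //; case: ifP => _; rewrite ffunE /= ltxx).
all: rewrite !big_ord_recl !big_ord0 /= !ffunE /= /W /=.
all: rewrite ?mul0e ?add0e ?adde0 ?mul1e ?mule0 ?adde0 ?add0e ?mule1 ?mul1e.
- rewrite -EFinM -!EFinD lee_fin; nra.
- by rewrite -EFinD.
- by [].
Qed.
End Upper.

Lemma OPT_le (R : realType) (e : R) (e0 : 0 < e) (e1 : e <= 1) :
  (OPT F_single (MA e) (MB e) <= (4 * e)%:E)%E.
Proof.
apply: (le_trans _ (pol_up _ _ e0 e1)).
by apply: ereal_inf_lbound; exists (Pol _ e).
Qed.

(* ComGap(I) >= M, stated with 0 < OPT < +oo so that the ratio is meaningful: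
   inf_{committing} disutility >= M * OPT. *)
Theorem theorem6 (R : realType) (M : R) : 0 < M ->
  exists M1 M2 : MDP R,
    [/\ wf_MDP M1, wf_MDP M2,
        (0 < OPT F_single M1 M2)%E, (OPT F_single M1 M2 < +oo)%E &
        (M%:E * OPT F_single M1 M2 <= ComInf F_single M1 M2)%E].
Proof.
move=> M0.
pose e : R := (4 * (M + 1))^-1.
have D0 : 0 < 4 * (M + 1) by apply: mulr_gt0 => //; apply: addr_gt0.
have e0 : 0 < e by rewrite /e invr_gt0.
have eD : e * (4 * (M + 1)) = 1 by rewrite /e mulVf // gt_eqF.
have e1 : e <= 1 by nra.
have key : M * (4 * e) <= 1 by nra.
exists (MA e), (MB e); split.
- exact: wfA.
- exact: wfB.
- by apply: lt_le_trans (opt_lb _ _ e0 e1); rewrite lte_fin.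
- by apply: le_lt_trans (OPT_le _ _ e0 e1) _; exact: ltry.
- apply: (le_trans _ (com_lb _ _ e0 e1)).
  apply: (@le_trans _ _ (M%:E * (4 * e)%:E)%E).
    by apply: lee_wpmul2l; [rewrite lee_fin ltW | exact: OPT_le].
  by rewrite -EFinM lee_fin.
Qed.
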